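(* Let $p$, $F$, $a$, $K$, $J_1$ be as in the context. The sequence $$0\longrightarrow\langle[a]\rangle\xrightarrow{\ i\ }F^\times/F^{\times p}\xrightarrow{\ \epsilon\ }J_1\xrightarrow{\ N\ }\langle[a]\rangle$$ is well defined and exact, where $\langle[a]\rangle\subseteq F^\times/F^{\times p}$ is the subgroup generated by the class of $a$, $i$ is inclusion, $\epsilon$ is induced by the inclusion $F^\times\subseteq K^\times$, and $N$ is induced by the norm $N_{K/F}\colon K^\times\to F^\times$ (in particular $[N_{K/F}(\theta)]\in\langle[a]\rangle$ for every $[\theta]\in J_1$). Moreover, $N\colon J_1\to\langle[a]\rangle$ is surjective if and only if $\xi_p\in N_{K/F}(K^\times)$.
   Context: Let $p$ be a prime and $F$ a field of characteristic different from $p$ containing a primitive $p$th root of unity $\xi_p$. Let $a\in F^\times\setminus F^{\times p}$ and $K=F(\sqrt[p]{a})$, a cyclic extension of degree $p$; $K^\times=K\setminus\{0\}$. Let $G=\mathrm{Gal}(K/F)$, $J=K^\times/K^{\times p}$, and $J_1=J^G$ the submodule of $G$-fixed elements of $J$. *)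

(* Defs.v *)
From HB Require Import structures.
From mathcomp Require Import all_boot all_order all_algebra all_fingroup all_field.
Set Implicit Arguments. Unset Strict Implicit. Unset Printing Implicit Defensive.
Import GRing.Theory.
Local Open Scope ring_scope.

Definition ppow (p : nat) {R : pzRingType} (x : R) : Prop := exists y : R, x = y ^+ p.

(* theta (in K^x) represents an element of J_1 = (K^x/K^xp)^G,
   where G = Gal(K/F) = 'Gal({:L} / 1) *)
Definition inJ1 (F : fieldType) (L : splittingFieldType F) (p : nat) (theta : L) : Prop :=
  theta != 0 /\
  forall g : gal_of {:L}, g \in 'Gal({:L} / 1%VS)%g -> ppow p (g theta / theta).

Definition normKF (F : fieldType) (L : splittingFieldType F) (theta : L) : L :=
  galNorm 1%VS {:L} theta.

(* Main.v *)
Require Import Defs.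
From HB Require Import structures.
From mathcomp Require Import all_boot all_order all_algebra all_fingroup all_field.
From mathcomp Require Import cyclic ring.
Import GRing.Theory.
Local Open Scope ring_scope.

Section S.
Variables (F : fieldType) (L : splittingFieldType F).

Lemma in1P (z : L) : reflect (exists c : F, z = c%:A) (z \in 1%VS).
Proof. apply: (iffP (vlineP _ _)) => -[c ->]; by exists c. Qed.

Lemma Anz (c : F) : c != 0 -> (c%:A : L) != 0.
Proof. by rewrite -in_algE fmorph_eq0. Qed.

Lemma gM (g : gal_of {:L}) (x y : L) : g (x * y) = g x * g y.
Proof. by rewrite rmorphM. Qed.
Lemma gXn (g : gal_of {:L}) (x : L) n : g (x ^+ n) = g x ^+ n.
Proof. by rewrite rmorphXn. Qed.
Lemma gV (g : gal_of {:L}) (x : L) : g (x^-1) = (g x)^-1.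
Proof. by rewrite fmorphV. Qed.
Lemma gD (g : gal_of {:L}) (x y : L) : g (x / y) = g x / g y.
Proof. by rewrite fmorph_div. Qed.
Lemma g_eq0 (g : gal_of {:L}) (x : L) : (g x == 0) = (x == 0).
Proof. by rewrite fmorph_eq0. Qed.
Lemma gP (g : gal_of {:L}) I (r : seq I) P (f : I -> L) :
  g (\prod_(i <- r | P i) f i) = \prod_(i <- r | P i) g (f i).
Proof. by rewrite rmorph_prod. Qed.

Lemma mem1A (c : F) : (c%:A : L) \in 1%VS.
Proof. by apply/in1P; exists c. Qed.

Variables (p : nat) (xi a : F) (alpha : L).
Hypotheses (pp : prime p) (pch : p \notin [pchar F]) (pxi : p.-primitive_root xi)
  (a0 : a != 0) (ha : alpha ^+ p = a%:A) (hgen : <<1%VS; alpha>>%VS = fullv).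

Let p0 : (0 < p)%N. Proof. exact: prime_gt0. Qed.

Lemma pF0 : (p%:R : F) != 0.
Proof. by move: pch; rewrite inE pp /=. Qed.

Lemma alpha0 : alpha != 0.
Proof.
apply/eqP => a0'; move: ha; rewrite a0' expr0n eqn0Ngt p0 /= => /esym/eqP.
by rewrite scaler_eq0 oner_eq0 orbF (negbTE a0).
Qed.

Definition fpol : {poly L} := 'X^p - (a%:A)%:P.

Lemma fpol_over : fpol \is a polyOver 1%VS.
Proof. by rewrite rpredB ?rpredX ?polyOverX ?polyOverC ?mem1A. Qed.

Lemma fpol_root : root fpol alpha.
Proof. by rewrite /root !hornerE ha subrr. Qed.

Lemma fpol_size : size fpol = p.+1.
Proof. exact: size_XnsubC. Qed.

Lemma fpol_sep : separable_poly fpol.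
Proof.
rewrite unlock /fpol derivB derivC subr0 derivXn -scaler_nat.
have -> : (p%:R : L) = (p%:R : F)%:A by rewrite scaler_nat.
rewrite coprimepZr; last by rewrite scaler_eq0 oner_eq0 orbF pF0.
apply: coprimep_expr.
have -> : ('X : {poly L}) = 'X - 0%:P by rewrite subr0.
rewrite coprimep_XsubC /root !hornerE.
rewrite oppr0 expr0n eqn0Ngt p0 /= sub0r oppr_eq0.
by rewrite scaler_eq0 oner_eq0 orbF.
Qed.

Lemma galL : galois 1%VS {:L}.
Proof.
rewrite /galois subvf normalFieldf andbT -hgen -adjoin_separable_eq.
apply/separable_elementP; exists fpol.
by rewrite fpol_over fpol_root fpol_sep.
Qed.

Notation G := 'Gal({:L} / 1%VS)%g.

Lemma fixF : fixedField G = 1%VS.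
Proof. exact/galois_fixedField/galL. Qed.

Lemma fixedP (z : L) : (forall g, g \in G -> g z = z) -> exists c : F, z = c%:A.
Proof. by move=> H; apply/in1P; rewrite -fixF; apply/fixedFieldP => //; rewrite memvf. Qed.

Lemma cardG : (#|G| <= p)%N.
Proof.
rewrite -galois_dim ?galL //.
have -> : \dim_(1%AS : {subfield L}) {:L}%AS = adjoin_degree 1%AS alpha.
  by rewrite adjoin_degreeE hgen.
rewrite -ltnS -size_minPoly -fpol_size.
apply: dvdp_leq; first by rewrite -size_poly_eq0 fpol_size.
exact: minPoly_dvdp fpol_over fpol_root.
Qed.

Hypothesis anp : ~ ppow p a.

Lemma alpha_not1 : alpha \notin 1%VS.
Proof.
apply/negP => /in1P[c hc]; apply: anp; exists c.
apply: (@fmorph_inj _ _ (in_alg L)); rewrite rmorphXn /= -ha hc.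
by [].
Qed.

Lemma exists_sigma : exists2 s, s \in G & s alpha != alpha.
Proof.
have: alpha \notin fixedField G by rewrite fixF alpha_not1.
move=> H; case: (boolP [exists s in G, s alpha != alpha]).
  by case/exists_inP=> s Hs Hn; exists s.
rewrite negb_exists_in => /forall_inP H2; case/negP: H.
apply/fixedFieldP; first exact: memvf.
by move=> s /H2; rewrite negbK => /eqP.
Qed.

Variable (s : gal_of {:L}).
Hypotheses (sG : s \in G) (sne : s alpha != alpha).

Definition om := s alpha / alpha.

Lemma fixs (z : L) : z \in 1%VS -> s z = z.
Proof. by move=> hz; rewrite (fixed_gal (subvf _) sG hz). Qed.

Lemma sA (c : F) : s (c%:A) = c%:A.
Proof. by rewrite fixs ?mem1A. Qed.

Lemma om_p : om ^+ p = 1.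
Proof.
by rewrite /om expr_div_n -gXn ha fixs ?mem1A // divff // Anz.
Qed.

Lemma xiL : p.-primitive_root (xi%:A : L).
Proof. by rewrite (fmorph_primitive_root (in_alg L)). Qed.

Lemma om_xi : exists2 i : nat, (0 < i < p)%N & om = (xi%:A) ^+ i.
Proof.
have [[i ltip] /= hi] := prim_rootP xiL om_p.
exists i => //; rewrite ltip andbT lt0n; apply/eqP => i0.
have: s alpha = om * alpha by rewrite /om divfK ?alpha0.
by rewrite hi i0 expr0 mul1r => e; move: sne; rewrite e eqxx.
Qed.

Lemma om1 : om \in 1%VS.
Proof. by have [i _ ->] := om_xi; rewrite rpredX ?mem1A. Qed.

Lemma om_prim : p.-primitive_root om.
Proof.
have [i /andP[i0 ip] ->] := om_xi.
rewrite (prim_root_exp_coprime _ xiL) coprime_sym prime_coprime //.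
by apply/negP => /(dvdn_leq i0); rewrite leqNgt ip.
Qed.

Lemma sX (i : nat) : (s ^+ i)%g alpha = om ^+ i * alpha.
Proof.
elim: i => [|i IH]; first by rewrite expg0 gal_id expr0 mul1r.
rewrite expgSr galM ?memvf // IH gM gXn fixs ?om1 //.
by rewrite exprSr -mulrA /om divfK ?alpha0.
Qed.

Lemma sX_inj : injective (fun i : 'I_p => (s ^+ i)%g).
Proof.
move=> i j /= eq_ij; have := congr1 (fun g : gal_of {:L} => g alpha) eq_ij.
rewrite /= !sX => /(mulIf alpha0) /eqP; rewrite (eq_prim_root_expr om_prim).
by rewrite !modn_small // => /eqP/val_inj.
Qed.

Lemma SG : [set (s ^+ (nat_of_ord i))%g | i in [pred i : 'I_p | true]] = G.
Proof.
apply/eqP; rewrite eqEcard; apply/andP; split.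
  by apply/subsetP => _ /imsetP[i _ ->]; rewrite groupX.
by rewrite (card_imset _ sX_inj) card_ord; exact: cardG.
Qed.

Lemma memG (g : gal_of {:L}) : g \in G -> exists i : 'I_p, g = (s ^+ i)%g.
Proof. by rewrite -SG => /imsetP[i _ ->]; exists i. Qed.

Lemma normE (t : L) : galNorm 1%VS {:L} t = \prod_(i < p) (s ^+ i)%g t.
Proof. by rewrite /galNorm -SG big_imset /=; last exact: in2W sX_inj. Qed.

Lemma gen_s : generator G s.
Proof.
rewrite /generator eq_sym eqEsubset cycle_subG sG /=.
by apply/subsetP => g /memG[i ->]; rewrite mem_cycle.
Qed.

Lemma sXi (z : L) (i : nat) : (s ^+ i.+1)%g z = s ((s ^+ i)%g z).
Proof. by rewrite expgSr galM ?memvf. Qed.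

Definition Pr (b : L) (n : nat) := \prod_(j < n) (s ^+ j)%g b.
Definition gam (b : L) := \prod_(i < p) Pr b i.

Lemma Pr0 b : Pr b 0 = 1.
Proof. by rewrite /Pr big_ord0. Qed.

Lemma PrS b n : Pr b n.+1 = b * s (Pr b n).
Proof.
rewrite /Pr big_ord_recl expg0 gal_id gP; congr (_ * _).
by apply: eq_bigr => j _; rewrite lift0 sXi.
Qed.

Lemma orbit (t b : L) : s t = t * b ^+ p -> forall i, (s ^+ i)%g t = t * Pr b i ^+ p.
Proof.
move=> h; elim=> [|i IH]; first by rewrite expg0 gal_id Pr0 expr1n mulr1.
by rewrite sXi IH gM gXn h PrS exprMn mulrA.
Qed.

Lemma normF (t b : L) : s t = t * b ^+ p -> galNorm 1%VS {:L} t = (t * gam b) ^+ p.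
Proof.
move=> h; rewrite normE; under eq_bigr => i _ do rewrite (orbit _ _ h).
by rewrite big_split /= prodr_const card_ord prodrXl exprMn.
Qed.

Lemma s_gam (b : L) : s (gam b) * b ^+ p = gam b * galNorm 1%VS {:L} b.
Proof.
have -> : b ^+ p = \prod_(i < p) b by rewrite prodr_const card_ord.
rewrite /gam gP mulrC -big_split /=.
under eq_bigr => i _ do rewrite -PrS.
have E1 : \prod_(i < p.+1) Pr b i = \prod_(i < p) Pr b i.+1.
  by rewrite big_ord_recl Pr0 mul1r; apply: eq_bigr => i _; rewrite lift0.
have E2 : \prod_(i < p.+1) Pr b i = \prod_(i < p) Pr b i * Pr b p.
  by rewrite big_ord_recr.
by rewrite -E1 E2 normE.
Qed.

Lemma Ainj (x y : F) : (x%:A : L) = y%:A -> x = y.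
Proof. by move=> h; apply: (fmorph_inj (in_alg L)); rewrite /= h. Qed.
Lemma AM (x y : F) : ((x * y)%:A : L) = x%:A * y%:A.
Proof. by rewrite -!in_algE rmorphM. Qed.
Lemma AX (x : F) n : ((x ^+ n)%:A : L) = x%:A ^+ n.
Proof. by rewrite -!in_algE rmorphXn. Qed.
Lemma AD (x y : F) : ((x / y)%:A : L) = x%:A / y%:A.
Proof. by rewrite -!in_algE fmorph_div. Qed.

Lemma s_alpha : s alpha = om * alpha.
Proof. by rewrite /om divfK ?alpha0. Qed.

Lemma sfix_all (u : L) : s u = u -> forall g, g \in G -> g u = u.
Proof.
move=> h g /memG[i ->]; elim: (nat_of_ord i) => [|n IH].
  by rewrite expg0 gal_id.
by rewrite sXi IH h.
Qed.

Lemma fix_s (u : L) : s u = u -> exists c : F, u = c%:A.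
Proof. by move=> h; apply: fixedP; apply: sfix_all. Qed.

Lemma unity_in1 (z : L) : z ^+ p = 1 -> z \in 1%VS.
Proof. by case/(prim_rootP om_prim) => i ->; rewrite rpredX ?om1. Qed.

Lemma p_root_in1 (w z : L) : z \in 1%VS -> z != 0 -> w ^+ p = z ^+ p -> w \in 1%VS.
Proof.
move=> z1 z0 h; have -> : w = (w / z) * z by rewrite divfK.
by rewrite rpredM // unity_in1 // expr_div_n h divff // expf_neq0.
Qed.

Lemma kummer (x : F) : x != 0 ->
  (ppow p (x%:A : L) <-> exists k : nat, ppow p (x / a ^+ k)).
Proof.
move=> x0; split => [[t ht] | [k [y hy]]]; last first.
  exists (y%:A * alpha ^+ k); rewrite exprMn -exprM mulnC exprM ha -!AX -AM.
  by rewrite -hy divfK // expf_neq0.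
have t0 : t != 0 by apply/eqP => t0'; move: (Anz _ x0); rewrite ht t0' expr0n eqn0Ngt p0 eqxx.
have : (s t / t) ^+ p = 1.
  by rewrite expr_div_n -gXn -ht fixs ?mem1A // divff ?Anz.
case/(prim_rootP om_prim) => j hj.
have hs : s (t / alpha ^+ j) = t / alpha ^+ j.
  rewrite gD gXn s_alpha exprMn -hj; field.
  by rewrite expf_neq0 ?alpha0 // g_eq0 t0.
have [c hc] := fix_s _ hs.
exists j; exists c; apply: Ainj.
by rewrite AD !AX ht -ha -hc expr_div_n -!exprM mulnC.
Qed.

Lemma J1_beta (t : L) : inJ1 p t -> t != 0 /\ exists2 b, b != 0 & s t = t * b ^+ p.
Proof.
case=> t0 /(_ s sG) [b hb]; split => //; exists b.
  by apply: contraNneq (t0) => b0; move: hb; rewrite b0 expr0n eqn0Ngt p0 /= => /eqP;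
     rewrite mulf_eq0 invr_eq0 g_eq0 orbb.
by rewrite -hb mulrC divfK.
Qed.

Lemma J1_of (t b : L) : t != 0 -> s t = t * b ^+ p -> inJ1 p t.
Proof.
move=> t0 h; split => // g /memG[i ->]; exists (Pr b i).
by rewrite (orbit _ _ h) mulrC mulKf.
Qed.

Lemma s_w (t b : L) : s t = t * b ^+ p ->
  s (t * gam b) = t * gam b * galNorm 1%VS {:L} b.
Proof. by move=> h; rewrite gM h -!mulrA; congr (_ * _); rewrite mulrC s_gam. Qed.

Lemma normA (x : F) : galNorm 1%VS {:L} (x%:A) = (x ^+ p)%:A.
Proof.
rewrite normE AX (eq_bigr (fun _ => x%:A)); last first.
  by move=> i _; rewrite (fixed_gal (subvf _) (groupX _ sG)) ?mem1A.
by rewrite prodr_const card_ord.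
Qed.

Lemma norm_in1 (t : L) : exists c : F, galNorm 1%VS {:L} t = c%:A.
Proof. by apply/in1P; apply: mem_galNorm; [exact: galL | exact: memvf]. Qed.

Lemma partB1 (x : F) : x != 0 -> inJ1 p (x%:A : L).
Proof. move=> x0; apply: (@J1_of _ 1); first exact: Anz. by rewrite fixs ?mem1A // expr1n mulr1. Qed.

Lemma N0 (t : L) : t != 0 -> normKF t != 0.
Proof. by rewrite /normKF galNorm_eq0. Qed.

Lemma partC1 (t : L) : inJ1 p t ->
  exists k : nat, exists y : F, y != 0 /\ normKF t = (a ^+ k * y ^+ p)%:A.
Proof.
move=> /J1_beta [t0 [b b0 h]]; have [c hc] := norm_in1 t.
have c0 : c != 0.
  by apply/eqP => c0; move: (N0 _ t0); rewrite /normKF hc c0 scale0r eqxx.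
have [|k [y hy]] := (kummer _ c0).1.
  by exists (t * gam b); rewrite -hc (normF _ _ h).
exists k, y; split.
  apply/eqP => y0; move: c0; rewrite -(divfK (expf_neq0 k a0) c) hy y0.
  by rewrite expr0n eqn0Ngt p0 /= mul0r eqxx.
by rewrite /normKF hc -hy mulrC divfK // expf_neq0.
Qed.

Lemma partC2 (t t' : L) : inJ1 p t -> inJ1 p t' -> ppow p (t / t') ->
  exists y : F, y != 0 /\ normKF t / normKF t' = (y ^+ p)%:A.
Proof.
move=> [t0 _] [t'0 _] [g hg]; have [c hc] := norm_in1 g.
have g0 : g != 0.
  apply/eqP => g0; move: t0; rewrite -(divfK t'0 t) hg g0.
  by rewrite expr0n eqn0Ngt p0 /= mul0r eqxx.
exists c; split.
  by apply/eqP => c0; move: g0; rewrite -(galNorm_eq0 1%VS {:L}) hc c0 scale0r eqxx.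
have -> : t = t' * g ^+ p by rewrite -hg mulrC divfK.
by rewrite /normKF galNormM galNormX mulrC mulKf ?galNorm_eq0 // hc AX.
Qed.

Lemma partD (t : L) : inJ1 p t ->
  ((exists y : F, normKF t = (y ^+ p)%:A) <->
   (exists x : F, x != 0 /\ ppow p (t / x%:A))).
Proof.
move=> tJ; have [t0 [b b0 h]] := J1_beta _ tJ.
split; last first.
  move=> [x [x0 [g hg]]].
  have [c hc] := norm_in1 g; exists (x * c).
  have -> : t = x%:A * g ^+ p by rewrite -hg mulrC divfK ?Anz.
  by rewrite /normKF galNormM galNormX normA hc exprMn AM !AX.
move=> [y hy]; set w := t * gam b.
have hw : w ^+ p = normKF t by rewrite /w /normKF (normF _ _ h).
have w0 : w != 0.
  by apply/eqP => w0; move: (N0 _ t0); rewrite -hw w0 expr0n eqn0Ngt p0 eqxx.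
have y0 : y != 0.
  by apply/eqP => y0; move: (N0 _ t0); rewrite hy y0 expr0n eqn0Ngt p0 /= scale0r eqxx.
have w1 : w \in 1%VS.
  by apply: (p_root_in1 _ (y%:A)); rewrite ?mem1A ?Anz // -AX -hy hw.
have Nb : galNorm 1%VS {:L} b = 1.
  have := s_w _ _ h; rewrite -/w fixs // => /esym /eqP.
  by rewrite -subr_eq0 -{2}[w]mulr1 -mulrBr mulf_eq0 (negbTE w0) subr_eq0 => /eqP.
have [b1 [_ b10] hb1] := Hilbert's_theorem_90 gen_s (memvf b) (introT eqP Nb).
have sb10 : s b1 != 0 by rewrite g_eq0.
have [x hx] : exists x : F, t * b1 ^+ p = x%:A.
  apply: fix_s; rewrite gM h gXn hb1.
  by rewrite expr_div_n -mulrA divfK // expf_neq0.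
have x0 : x != 0.
  have : t * b1 ^+ p != 0 by rewrite mulf_neq0 ?expf_neq0.
  by rewrite hx => H; apply/eqP => x0; move: H; rewrite x0 scale0r eqxx.
exists x; split => //; exists (b1^-1).
by rewrite -hx invfM mulrA divff // mul1r exprVn.
Qed.

Lemma gam0 (b : L) : b != 0 -> gam b != 0.
Proof.
move=> b0; apply/prodf_neq0 => i _; apply/prodf_neq0 => j _.
by rewrite g_eq0.
Qed.

Lemma partE :
  (forall k : nat, exists t : L, inJ1 p t /\
      exists y : F, normKF t = (a ^+ k * y ^+ p)%:A)
  <-> (exists t : L, t != 0 /\ normKF t = xi%:A).
Proof.
split.
  move=> /(_ 1%N) [t [tJ [y hy]]]; have [t0 [b b0 h]] := J1_beta _ tJ.
  set w := t * gam b.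
  have hw : w ^+ p = normKF t by rewrite /w /normKF (normF _ _ h).
  have w0 : w != 0.
    by apply/eqP => w0; move: (N0 _ t0); rewrite -hw w0 expr0n eqn0Ngt p0 eqxx.
  have y0 : y != 0.
    by apply/eqP => y0; move: (N0 _ t0); rewrite hy y0 expr0n eqn0Ngt p0 /= mulr0 scale0r eqxx.
  set z := alpha * y%:A.
  have z0 : z != 0 by rewrite mulf_neq0 ?alpha0 ?Anz.
  have [j hj] : exists j : nat, w = om ^+ j * z.
    have : (w / z) ^+ p = 1.
      by rewrite expr_div_n hw hy /z exprMn ha -AX -AM expr1 divff // Anz // mulf_neq0 // expf_neq0.
    by case/(prim_rootP om_prim) => j hj; exists j; rewrite -hj divfK.
  have Nb : galNorm 1%VS {:L} b = om.
    apply: (mulfI w0); rewrite -(s_w _ _ h) -/w hj gM gXn fixs ?om1 // /z gM s_alpha.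
    by rewrite fixs ?mem1A //; ring.
  have [m hm] := prim_rootP om_prim (prim_expr_order xiL).
  exists (b ^+ m); split; first by rewrite expf_neq0.
  by rewrite /normKF galNormX Nb hm.
move=> [b [b0 hb]]; have [i _ hi] := om_xi.
set be := b ^+ i.
have be0 : be != 0 by rewrite expf_neq0.
have Nbe : galNorm 1%VS {:L} be = om by rewrite galNormX -/(normKF b) hb hi.
set g := gam be; have g0 : g != 0 by exact: gam0.
have sg : s g = g * om / be ^+ p.
  by rewrite -Nbe -s_gam mulfK // expf_neq0.
set t := alpha / g.
have t0 : t != 0 by rewrite mulf_neq0 ?alpha0 ?invr_eq0.
have st : s t = t * be ^+ p.
  rewrite /t gD s_alpha sg.
  have om0 : om != 0 by rewrite (prim_root_eq0 om_prim) -lt0n p0.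
  move: (be ^+ p) (expf_neq0 p be0) => B B0.
  by field; rewrite om0 g0 B0.
have Nt : normKF t = a%:A.
  by rewrite /normKF (normF _ _ st) /t divfK.
move=> k; exists (t ^+ k); split.
  apply: (@J1_of _ (be ^+ k)); first by rewrite expf_neq0.
  by rewrite gXn st exprMn exprAC.
exists 1; by rewrite /normKF galNormX -/(normKF t) Nt expr1n mulr1 AX.
Qed.

Lemma main_s :
  [/\
   forall x : F, x != 0 ->
     (ppow p (x%:A : L) <-> exists k : nat, ppow p (x / a ^+ k)),
   (forall x : F, x != 0 -> inJ1 p (x%:A : L)) /\
   (forall x y : F, x != 0 -> y != 0 -> ppow p (x / y) ->
      ppow p (x%:A / y%:A : L)),
   (forall theta : L, inJ1 p theta ->
      exists k : nat, exists y : F, y != 0 /\ normKF theta = (a ^+ k * y ^+ p)%:A) /\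
   (forall theta theta' : L, inJ1 p theta -> inJ1 p theta' ->
      ppow p (theta / theta') ->
      exists y : F, y != 0 /\ normKF theta / normKF theta' = (y ^+ p)%:A),
   forall theta : L, inJ1 p theta ->
     ((exists y : F, normKF theta = (y ^+ p)%:A) <->
      (exists x : F, x != 0 /\ ppow p (theta / x%:A)))
   &
   (forall k : nat, exists theta : L, inJ1 p theta /\
      exists y : F, normKF theta = (a ^+ k * y ^+ p)%:A)
   <-> (exists theta : L, theta != 0 /\ normKF theta = xi%:A)].
Proof.
split.
- exact: kummer.
- split; first exact: partB1.
  by move=> x y _ _ [z hz]; exists z%:A; rewrite -AD hz AX.
- split; [exact: partC1 | exact: partC2].
- exact: partD.
- exact: partE.
Qed.

End S.

Theorem mainTheorem10 (F : fieldType) (L : splittingFieldType F) (p : nat)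
    (xi a : F) (alpha : L) :
  prime p -> p \notin [pchar F] -> p.-primitive_root xi ->
  a != 0 -> ~ ppow p a ->
  alpha ^+ p = a%:A -> <<1%VS; alpha>>%VS = fullv ->
  [/\
   (* exactness at F^x/F^xp: ker(epsilon) = <[a]> *)
   forall x : F, x != 0 ->
     (ppow p (x%:A : L) <-> exists k : nat, ppow p (x / a ^+ k)),
   (* epsilon is well defined: F^x lands in J_1, and F^xp in K^xp *)
   (forall x : F, x != 0 -> inJ1 p (x%:A : L)) /\
   (forall x y : F, x != 0 -> y != 0 -> ppow p (x / y) ->
      ppow p (x%:A / y%:A : L)),
   (* N is well defined: N(J_1) lands in <[a]>, and N respects classes *)
   (forall theta : L, inJ1 p theta ->
      exists k : nat, exists y : F, y != 0 /\ normKF theta = (a ^+ k * y ^+ p)%:A) /\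
   (forall theta theta' : L, inJ1 p theta -> inJ1 p theta' ->
      ppow p (theta / theta') ->
      exists y : F, y != 0 /\ normKF theta / normKF theta' = (y ^+ p)%:A),
   (* exactness at J_1: ker(N) = im(epsilon) *)
   forall theta : L, inJ1 p theta ->
     ((exists y : F, normKF theta = (y ^+ p)%:A) <->
      (exists x : F, x != 0 /\ ppow p (theta / x%:A)))
   &
   (* N : J_1 -> <[a]> is surjective iff xi is a norm *)
   (forall k : nat, exists theta : L, inJ1 p theta /\
      exists y : F, normKF theta = (a ^+ k * y ^+ p)%:A)
   <-> (exists theta : L, theta != 0 /\ normKF theta = xi%:A)].
Proof.
move=> pp pch pxi a0 anp ha hgen.
have [s sG sne] : exists2 s, s \in 'Gal({:L} / 1%VS)%g & s alpha != alpha.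
  apply: exists_sigma; eassumption.
exact: (@main_s _ _ _ _ _ _ pp pch pxi a0 ha hgen _ sG sne).
Qed.
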